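(* Assume $b,f,g$ are bounded and uniformly continuous in all variables. For a compact $K\subset\mathbb X$ and $\varepsilon>0$ let $\rho_K(\varepsilon):=\sup_{\theta\in K}d(\mathbb H_\varepsilon(\theta),\mathbb H(\theta))$. Then $\lim_{\varepsilon\to0}\rho_K(\varepsilon)=0$ if and only if $\mathbb H$ is (uniformly) continuous on $K$ with respect to $d$.
   Context: Fix integers $d,N\ge 1$ and $T>0$. For $i=1,\dots,N$, $A_i$ is a domain in some Euclidean space and $A:=A_1\times\cdots\times A_N$; $(a^{-i},\tilde a_i)$ denotes $a\in A$ with $i$-th component replaced by $\tilde a_i\in A_i$. Data: $b:[0,T]\times\mathbb R^d\times A\to\mathbb R^d$, $f:[0,T]\times\mathbb R^d\times A\to\mathbb R^N$, $g:\mathbb R^d\to\mathbb R^N$. Let $\mathbb X:=[0,T]\times\mathbb R^d\times\mathbb R^{dN}$, $\theta=(t,x,z)$, $z=(z^1,\dots,z^N)$, $z^i\in\mathbb R^d$, $\theta^i:=(t,x,z^i)$; $h_i(t,x,z^i,a):=f_i(t,x,a)+b(t,x,a)\cdot z^i$, $h(\theta,a):=(h_1(\theta^1,a),\dots,h_N(\theta^N,a))$. For $\varepsilon>0$, $\mathcal E_\varepsilon(\theta)$ is the set of $a\in A$ with $h_i(\theta^i,a)\ge h_i(\theta^i,(a^{-i},\tilde a_i))-\varepsilon$ for all $i$, $\tilde a_i\in A_i$; $\mathbb H_\varepsilon(\theta):=\{y\in\mathbb R^N:|y-h(\theta,a)|<\varepsilon$ for some $a\in\mathcal E_\varepsilon(\theta)\}$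 and $\mathbb H(\theta):=\bigcap_{\varepsilon>0}\mathbb H_\varepsilon(\theta)$. For sets $\mathbb H_1,\mathbb H_2\subset\mathbb R^N$, $d$ is the Hausdorff distance $d(\mathbb H_1,\mathbb H_2)=[\sup_{y_1\in\mathbb H_1}d(y_1,\mathbb H_2)]\vee[\sup_{y_2\in\mathbb H_2}d(y_2,\mathbb H_1)]$, $d(y,\mathbb H'):=\inf_{y'\in\mathbb H'}|y-y'|$. *)

(* Defs.v *)
From HB Require Import structures.
From mathcomp Require Import all_boot all_order all_algebra.
From mathcomp Require Import all_classical all_reals all_analysis.
Unset Printing Implicit Defensive.
Import Order.TTheory GRing.Theory Num.Theory.
Import numFieldNormedType.Exports.
Local Open Scope classical_set_scope.
Local Open Scope ring_scope.

Section Game.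
Variables (R : realType) (d N : nat) (T : R) (k : 'I_N -> nat).

Definition profile := forall i : 'I_N, 'rV[R]_(k i).

(* states theta = (t, x, z) with z the N x d matrix whose i-th row is z^i *)
Definition state := (R * 'rV[R]_d * 'M[R]_(N, d))%type.

Definition Xset : set state := [set th | 0 <= th.1.1 <= T].

Definition in_A (A : forall i : 'I_N, set 'rV[R]_(k i)) (a : profile) :=
  forall i, A i (a i).

Definition enorm {n} (v : 'rV[R]_n) : R := Num.sqrt (\sum_(j < n) v 0 j ^+ 2).

Definition repl (a : profile) {i : 'I_N} (ai : 'rV[R]_(k i)) : profile :=
  @dfwith _ (fun j => 'rV[R]_(k j)) a i ai.


Variables (b : R -> 'rV[R]_d -> profile -> 'rV[R]_d)
          (f : R -> 'rV[R]_d -> profile -> 'rV[R]_N).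

Definition hi (i : 'I_N) (th : state) (a : profile) : R :=
  f th.1.1 th.1.2 a 0 i + \sum_(j < d) b th.1.1 th.1.2 a 0 j * th.2 i j.

Definition hvec (th : state) (a : profile) : 'rV[R]_N := \row_i hi i th a.

Variable A : forall i : 'I_N, set 'rV[R]_(k i).

Definition Eeps (eps : R) (th : state) : set profile :=
  [set a | in_A A a /\
    forall i (ai : 'rV[R]_(k i)), A i ai ->
      hi i th (repl a ai) - eps <= hi i th a].

Definition Heps (eps : R) (th : state) : set 'rV[R]_N :=
  [set y | exists2 a, Eeps eps th a & enorm (y - hvec th a) < eps].

Definition Hset (th : state) : set 'rV[R]_N :=
  [set y | forall eps, 0 < eps -> Heps eps th y].

End Game.
Arguments profile {R N} k.
Arguments enorm {R n} v.
Arguments in_A {R N k} A a.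
Arguments repl {R N k} a {i} ai.
Arguments hi {R d N k} b f i th a.
Arguments hvec {R d N k} b f th a.
Arguments Eeps {R d N k} b f A eps th.
Arguments Heps {R d N k} b f A eps th.
Arguments Hset {R d N k} b f A th.
Arguments Xset {R} d N T.

Section Hausdorff.
Variables (R : realType) (n : nat).
Local Open Scope ereal_scope.

(* d(y, H') = inf_{y' in H'} |y - y'|   (= +oo if H' is empty) *)
Definition dist_pt (y : 'rV[R]_n) (S : set 'rV[R]_n) : \bar R :=
  ereal_inf [set (enorm (y - y'))%:E | y' in S].

(* Hausdorff distance; sups of nonnegative quantities, sup of empty set := 0 *)
Definition hausdorff (S1 S2 : set 'rV[R]_n) : \bar R :=
  maxe (ereal_sup ([set 0] `|` [set dist_pt y S2 | y in S1]))
       (ereal_sup ([set 0] `|` [set dist_pt y S1 | y in S2])).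
End Hausdorff.
Arguments dist_pt {R n} y S.
Arguments hausdorff {R n} S1 S2.

Definition rhoK {R : realType} {d N} {k : 'I_N -> nat}
  (b : R -> 'rV[R]_d -> profile k -> 'rV[R]_d)
  (f : R -> 'rV[R]_d -> profile k -> 'rV[R]_N)
  (A : forall i : 'I_N, set 'rV[R]_(k i)) (K : set (state R d N)) (eps : R)
  : \bar R :=
  ereal_sup ([set 0%E] `|` [set hausdorff (Heps b f A eps th) (Hset b f A th)
                            | th in K]).

Definition bounded_on_dom {R : realType} {d N} {k : 'I_N -> nat} (T : R)
  (A : forall i : 'I_N, set 'rV[R]_(k i)) {V : normedModType R}
  (F : R -> 'rV[R]_d -> profile k -> V) :=
  exists M : R, forall t x a, 0 <= t <= T -> in_A A a -> `|F t x a| <= M.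

Definition unif_cont_on_dom {R : realType} {d N} {k : 'I_N -> nat} (T : R)
  (A : forall i : 'I_N, set 'rV[R]_(k i)) {V : normedModType R}
  (F : R -> 'rV[R]_d -> profile k -> V) :=
  forall e : R, 0 < e -> exists2 del : R, 0 < del &
    forall t t' x x' (a a' : profile k),
      0 <= t <= T -> 0 <= t' <= T -> in_A A a -> in_A A a' ->
      `|t - t'| < del -> `|x - x'| < del -> (forall i, `|a i - a' i| < del) ->
      `|F t x a - F t' x' a'| < e.

Definition Hd_unif_cont_on {R : realType} {d N} (G : state R d N -> set 'rV[R]_N)
  (K : set (state R d N)) :=
  forall e : R, 0 < e -> exists2 del : R, 0 < del &
    forall th th', K th -> K th' -> ball th del th' ->
      (hausdorff (G th) (G th') < e%:E)%E.

(* Main.v *)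
Set Warnings "-all".
Require Import Defs.
From HB Require Import structures.
From mathcomp Require Import all_boot all_order all_algebra.
From mathcomp Require Import all_classical all_reals all_analysis.
From mathcomp Require Import ring lra.
Import Order.TTheory GRing.Theory Num.Theory.
Import numFieldNormedType.Exports.
Local Open Scope classical_set_scope.
Local Open Scope ring_scope.

Section Enorm.
Context {R : realType}.

Lemma sum_term_le {n : nat} (F : 'I_n -> R) j :
  (forall i, 0 <= F i) -> F j <= \sum_i F i.
Proof.
move=> F0; rewrite (bigD1 j) //= lerDl; exact: sumr_ge0.
Qed.

Lemma mx_entry_le {m n} (M : 'M[R]_(m, n)) i j : `|M i j| <= `|M|.
Proof.
change (`|M i j| <= mx_norm M); rewrite mx_normrE; apply/bigmax_geP; right => /=.
by exists (i, j).
Qed.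

Lemma enorm_ge0 {n} (v : 'rV[R]_n) : 0 <= enorm v.
Proof. exact: sqrtr_ge0. Qed.

Lemma entry_le_enorm {n} (v : 'rV[R]_n) j : `|v 0 j| <= enorm v.
Proof.
rewrite /enorm -sqrtr_sqr ler_sqrt; last by apply: sumr_ge0 => i _; exact: sqr_ge0.
apply: (sum_term_le (fun i => v 0 i ^+ 2)) => i; exact: sqr_ge0.
Qed.

Lemma enorm_le_sum {n} (v : 'rV[R]_n) : enorm v <= \sum_j `|v 0 j|.
Proof.
have S0 : 0 <= \sum_j `|v 0 j| by apply: sumr_ge0.
rewrite /enorm -(ger0_norm S0) -sqrtr_sqr ler_sqrt; last exact: sqr_ge0.
rewrite [X in _ <= X]expr2 mulr_suml; apply: ler_sum => i _.
rewrite -real_normK ?num_real // expr2; apply: ler_wpM2l => //.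
exact: (sum_term_le (fun j => `|v 0 j|)).
Qed.

Lemma enorm_le_norm {n} (v : 'rV[R]_n) : enorm v <= n%:R * `|v|.
Proof.
apply: (le_trans (enorm_le_sum v)).
apply: (@le_trans _ _ (\sum_(j < n) `|v|)).
  by apply: ler_sum => j _; exact: mx_entry_le.
by rewrite sumr_const card_ord mulr_natl.
Qed.

Lemma two_mul_le {n : nat} (x y : 'I_n -> R) :
  2 * \sum_i x i * y i <= \sum_i x i ^+ 2 + \sum_i y i ^+ 2.
Proof.
rewrite -subr_ge0.
have -> : \sum_i x i ^+ 2 + \sum_i y i ^+ 2 - 2 * \sum_i x i * y i
          = \sum_i (x i - y i) ^+ 2.
  rewrite mulr_sumr -big_split /= -sumrB; apply: eq_bigr => i _.
  by rewrite sqrrB; ring.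
by apply: sumr_ge0 => i _; exact: sqr_ge0.
Qed.

Lemma cauchy_schwarz {n : nat} (u v : 'I_n -> R) :
  \sum_i u i * v i <= Num.sqrt (\sum_i u i ^+ 2) * Num.sqrt (\sum_i v i ^+ 2).
Proof.
set A := \sum_i u i ^+ 2; set B := \sum_i v i ^+ 2.
have A0 : 0 <= A by apply: sumr_ge0 => i _; exact: sqr_ge0.
have B0 : 0 <= B by apply: sumr_ge0 => i _; exact: sqr_ge0.
have [sA0|sAp] := eqVneq (Num.sqrt A) 0.
  have A00 : A = 0 by apply/eqP; rewrite eq_le A0 andbT -sqrtr_eq0 sA0.
  have u0 i : u i = 0.
    apply/eqP; rewrite -sqrf_eq0; apply/eqP.
    by apply: (psumr_eq0P (P := predT) (F := fun i => u i ^+ 2)) => // j _; exact: sqr_ge0.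
  by rewrite big1 ?sA0 ?mul0r // => i _; rewrite u0 mul0r.
have [sB0|sBp] := eqVneq (Num.sqrt B) 0.
  have B00 : B = 0 by apply/eqP; rewrite eq_le B0 andbT -sqrtr_eq0 sB0.
  have v0 i : v i = 0.
    apply/eqP; rewrite -sqrf_eq0; apply/eqP.
    by apply: (psumr_eq0P (P := predT) (F := fun i => v i ^+ 2)) => // j _; exact: sqr_ge0.
  by rewrite big1 ?sB0 ?mulr0 // => i _; rewrite v0 mulr0.
have sA : 0 < Num.sqrt A by rewrite lt_neqAle eq_sym sAp sqrtr_ge0.
have sB : 0 < Num.sqrt B by rewrite lt_neqAle eq_sym sBp sqrtr_ge0.
have := two_mul_le (fun i => u i * Num.sqrt B) (fun i => v i * Num.sqrt A).
have -> : \sum_i (u i * Num.sqrt B) * (v i * Num.sqrt A)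
    = (Num.sqrt A * Num.sqrt B) * \sum_i u i * v i.
  by rewrite mulr_sumr; apply: eq_bigr => i _; ring.
have -> : \sum_i (u i * Num.sqrt B) ^+ 2 = A * B.
  by rewrite /A mulr_suml; apply: eq_bigr => i _; rewrite exprMn sqr_sqrtr.
have -> : \sum_i (v i * Num.sqrt A) ^+ 2 = A * B.
  rewrite /B mulr_sumr; apply: eq_bigr => i _; rewrite exprMn sqr_sqrtr //; exact: mulrC.
have -> : A * B + A * B = 2 * (Num.sqrt A * Num.sqrt B) * (Num.sqrt A * Num.sqrt B).
  rewrite -[in LHS](sqr_sqrtr A0) -[in LHS](sqr_sqrtr B0); ring.
have p : 0 < 2 * (Num.sqrt A * Num.sqrt B) by rewrite mulr_gt0 // mulr_gt0.
move=> h; rewrite -(ler_pM2l p); apply: le_trans h; rewrite le_eqVlt; apply/orP; left; apply/eqP; ring.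
Qed.

Lemma enormD {n} (u v : 'rV[R]_n) : enorm (u + v) <= enorm u + enorm v.
Proof.
have S0 : 0 <= enorm u + enorm v by rewrite addr_ge0 // enorm_ge0.
rewrite /enorm -[X in _ <= X](ger0_norm S0) -sqrtr_sqr ler_sqrt; last exact: sqr_ge0.
rewrite sqrrD !sqr_sqrtr; try by apply: sumr_ge0 => i _; exact: sqr_ge0.
have := cauchy_schwarz (fun i => u 0 i) (fun i => v 0 i).
move=> cs.
have -> : \sum_j (u + v) 0 j ^+ 2 =
   \sum_j u 0 j ^+ 2 + \sum_j v 0 j ^+ 2 + 2 * \sum_j u 0 j * v 0 j.
  rewrite mulr_sumr -!big_split /=; apply: eq_bigr => i _; rewrite mxE; ring.
rewrite /enorm mulr2n; lra.
Qed.

Lemma enormN {n} (v : 'rV[R]_n) : enorm (- v) = enorm v.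
Proof. by rewrite /enorm; congr Num.sqrt; apply: eq_bigr => i _; rewrite mxE sqrrN. Qed.

Lemma enormB {n} (u v : 'rV[R]_n) : enorm (u - v) = enorm (v - u).
Proof. by rewrite -enormN opprB. Qed.

Lemma enorm_tri {n} (x y z : 'rV[R]_n) : enorm (x - z) <= enorm (x - y) + enorm (y - z).
Proof. by have := enormD (x - y) (y - z); rewrite addrA subrK. Qed.

Lemma enorm00 {n} : enorm (0 : 'rV[R]_n) = 0.
Proof. by rewrite /enorm big1 ?sqrtr0 // => i _; rewrite mxE expr0n. Qed.

End Enorm.

Section Haus.
Variables (R : realType) (n : nat).
Implicit Types S : set 'rV[R]_n.

Lemma haus_lt S1 S2 e : (hausdorff S1 S2 < e%:E)%E ->
  (forall y, S1 y -> exists2 y', S2 y' & enorm (y - y') < e) /\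
  (forall y, S2 y -> exists2 y', S1 y' & enorm (y - y') < e).
Proof.
rewrite /hausdorff gt_max => /andP[h1 h2]; split => y Sy.
- have : (dist_pt y S2 < e%:E)%E.
    apply: le_lt_trans h1; apply: le_ereal_sup_tmp; exists (dist_pt y S2) => //.
    by right; exists y.
  by move=> /ereal_inf_lt [z [y' S2y' <-]]; rewrite lte_fin => h; exists y'.
- have : (dist_pt y S1 < e%:E)%E.
    apply: le_lt_trans h2; apply: le_ereal_sup_tmp; exists (dist_pt y S1) => //.
    by right; exists y.
  by move=> /ereal_inf_lt [z [y' S2y' <-]]; rewrite lte_fin => h; exists y'.
Qed.

Lemma haus_le S1 S2 e : 0 <= e ->
  (forall y, S1 y -> exists2 y', S2 y' & enorm (y - y') <= e) ->
  (forall y, S2 y -> exists2 y', S1 y' & enorm (y - y') <= e) ->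
  (hausdorff S1 S2 <= e%:E)%E.
Proof.
move=> e0 h1 h2; rewrite /hausdorff ge_max; apply/andP; split;
  apply/ereal_supP => _ [->|[y Sy <-]]; rewrite ?lee_fin //.
- have [y' S2y' hy] := h1 y Sy; apply: ge_ereal_inf.
  by exists (enorm (y - y'))%:E; [exists y' | rewrite lee_fin].
- have [y' S2y' hy] := h2 y Sy; apply: ge_ereal_inf.
  by exists (enorm (y - y'))%:E; [exists y' | rewrite lee_fin].
Qed.

End Haus.

Lemma nested_cluster {R : realType} {X : topologicalType} (B : set X) (S : R -> set X) :
  compact B -> (forall e, 0 < e -> S e !=set0) ->
  (forall e e', 0 < e -> e <= e' -> S e `<=` S e') -> S 1 `<=` B ->
  exists2 p, B p & forall e U, 0 < e -> nbhs p U -> S e `&` U !=set0.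
Proof.
move=> cB ne mono SB.
have FF : Filter (filter_from [set e : R | 0 < e] S).
  apply: filter_from_filter; first by exists 1 => /=; exact: ltr01.
  move=> i j /= i0 j0; exists (Num.min i j); first by rewrite /= lt_min i0 j0.
  move=> y Sy; split; apply: (mono _ _ _ _ _ Sy); rewrite ?lt_min ?i0 ?j0 //;
    by rewrite ge_min lexx ?orbT.
have PF : ProperFilter (filter_from [set e : R | 0 < e] S).
  by apply: filter_from_proper => i i0; exact: ne.
have FB : filter_from [set e : R | 0 < e] S B by exists 1 => //=; exact: ltr01.
have [p [Bp clp]] := cB _ PF FB.
exists p => // e U e0 pU; apply: clp => //; by exists e.
Qed.

Lemma ball_state {R : realType} {d N} (th th' : state R d N) del : ball th del th' ->
  `|th.1.1 - th'.1.1| < del /\ `|th.1.2 - th'.1.2| < del /\ `|th.2 - th'.2| < del.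
Proof.
move=> [[h1 h2] h3].
by rewrite -!ball_normE /= in h1 h2 h3.
Qed.

Lemma compact_cball {R : realType} N (M : R) :
  compact (closed_ball_ Num.norm (0 : 'rV[R]_N) M).
Proof.
apply: bounded_closed_compact; last exact: closed_closed_ball_.
exists M; split; first exact: num_real.
move=> x Mx y /= h; apply: le_trans (ltW Mx); move: h.
by rewrite /closed_ball_ /= sub0r normrN.
Qed.

Lemma compact_zbound {R : realType} {d N} (K : set (state R d N)) :
  compact K -> exists C, 0 <= C /\ forall th, K th -> `|th.2| <= C.
Proof.
move=> /compact_bounded [M [Mr HM]].
exists (`|M| + 1); split; first by rewrite addr_ge0.
move=> th Kth.
have /HM /(_ th Kth) : M < `|M| + 1.
  by apply: le_lt_trans (real_ler_norm Mr) _; rewrite ltrDl.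
by apply: le_trans; rewrite prod_normE le_max lexx orbT.
Qed.

Lemma ball_enorm {R : realType} {n} (v w : 'rV[R]_n) r : 0 < r ->
  ball v (r / (n%:R + 1)) w -> enorm (v - w) < r.
Proof.
move=> r0; rewrite -ball_normE /= => h.
have n1 : 0 < n%:R + 1 :> R by rewrite ltr_wpDl.
apply: le_lt_trans (enorm_le_norm _) _.
apply: (@le_lt_trans _ _ (n%:R * (r / (n%:R + 1)))).
  by apply: ler_wpM2l => //; exact: ltW.
rewrite mulrA ltr_pdivrMr // mulrDr mulr1; lra.
Qed.

Lemma mul_div_le {R : realType} (x c : R) : 0 <= x -> 0 < c -> x * (c / (x + 1)) <= c.
Proof.
move=> x0 c0; have x1 : 0 < x + 1 by rewrite ltr_wpDl.
rewrite mulrA ler_pdivrMr // mulrDr mulr1; lra.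
Qed.

Section Game.
Variables (R : realType) (d N : nat) (T : R) (k : 'I_N -> nat).
Variable (A : forall i : 'I_N, set 'rV[R]_(k i)).
Variables (b : R -> 'rV[R]_d -> @profile R N k -> 'rV[R]_d)
          (f : R -> 'rV[R]_d -> @profile R N k -> 'rV[R]_N).

Local Notation Eeps := (Eeps b f A).
Local Notation Heps := (Heps b f A).
Local Notation Hset := (Hset b f A).
Local Notation hi := (hi b f).
Local Notation hvec := (hvec b f).

Lemma inA_repl {a : @profile R N k} {i} {ai : 'rV[R]_(k i)} :
  in_A A a -> A i ai -> in_A A (repl a ai).
Proof.
move=> Ha Hai j; rewrite /repl; have [<-|ij] := eqVneq i j.
  by rewrite dfwithin.
by rewrite dfwithout.
Qed.

Definition Close eta th th' := forall a, in_A A a ->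
  (forall i, `|hi i th a - hi i th' a| < eta) /\ enorm (hvec th a - hvec th' a) < eta.

Lemma Eeps_mono e e' th : e <= e' -> Eeps e th `<=` Eeps e' th.
Proof.
move=> ee' a [Ha Hi]; split => // i ai Aai.
have := Hi i ai Aai; apply: le_trans; rewrite lerD2l lerN2 //.
Qed.

Lemma Heps_mono e e' th : e <= e' -> Heps e th `<=` Heps e' th.
Proof.
move=> ee' y [a Ea hy]; exists a; first exact: Eeps_mono Ea.
exact: lt_le_trans hy ee'.
Qed.

Lemma Hset_Heps th e : 0 < e -> Hset th `<=` Heps e th.
Proof. by move=> e0 y /(_ e e0). Qed.

Lemma Eeps_close eta e th th' : Close eta th th' -> Eeps e th `<=` Eeps (e + 2 * eta) th'.
Proof.
move=> C a [Ha Hi]; split => // i ai Aai.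
have [h1 _] := C _ (inA_repl Ha Aai).
have [h2 _] := C _ Ha.
have := Hi i ai Aai.
move: (h1 i) (h2 i); rewrite !ltr_norml; lra.
Qed.

Lemma Heps_close eta e th th' : 0 < eta -> Close eta th th' ->
  Heps e th `<=` Heps (e + 2 * eta) th'.
Proof.
move=> eta0 C y [a Ea hy]; exists a; first exact: Eeps_close Ea.
have [_ h2] := C _ (proj1 Ea).
apply: le_lt_trans (enorm_tri _ (hvec th a) _) _.
lra.
Qed.

Lemma Hset_closure th y :
  (forall e, 0 < e -> exists2 y', Heps e th y' & enorm (y - y') < e) -> Hset th y.
Proof.
move=> H e e0.
have e20 : 0 < e / 2 by rewrite divr_gt0.
have [y' [a Ea hy'] hyy'] := H _ e20.
exists a; first by apply: Eeps_mono Ea; lra.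
apply: le_lt_trans (enorm_tri _ y' _) _.
lra.
Qed.

Hypothesis bb : bounded_on_dom T A b.
Hypothesis bf : bounded_on_dom T A f.
Hypothesis ub : unif_cont_on_dom T A b.
Hypothesis uf : unif_cont_on_dom T A f.

Lemma h_bounded th : 0 <= th.1.1 <= T ->
  exists M, forall a, in_A A a -> forall i, `|hi i th a| <= M.
Proof.
move=> ht; have [Mf hf] := bf; have [Mb hb] := bb.
exists (Mf + d%:R * (Mb * `|th.2|)) => a Ha i.
rewrite /Defs.hi; apply: le_trans (ler_normD _ _) _; apply: lerD.
  exact: le_trans (mx_entry_le _ _ _) (hf _ _ _ ht Ha).
apply: le_trans (ler_norm_sum _ _ _) _.
apply: (@le_trans _ _ (\sum_(j < d) Mb * `|th.2|)).
  apply: ler_sum => j _; rewrite normrM; apply: ler_pM => //.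
    exact: le_trans (mx_entry_le _ _ _) (hb _ _ _ ht Ha).
  exact: mx_entry_le.
by rewrite sumr_const card_ord mulr_natl.
Qed.

Lemma pointwise th : 0 <= th.1.1 <= T -> forall e, 0 < e ->
  exists2 eps, 0 < eps & forall y, Heps eps th y ->
    exists2 y', Hset th y' & enorm (y - y') < e.
Proof.
move=> ht e e0; have ht0 := ht; move: ht0 => /(h_bounded th) ht0.
have [//|nH] := pselect (exists2 eps, 0 < eps & forall y, Heps eps th y ->
    exists2 y', Hset th y' & enorm (y - y') < e).
pose S eps := [set y | Heps eps th y /\ forall y', Hset th y' -> e <= enorm (y - y')].
have ne eps : 0 < eps -> S eps !=set0.
  move=> eps0; apply: contrapT => hn; apply: nH; exists eps => // y Hy.
  apply: contrapT => hn2; apply: hn; exists y; split => // y' Hy'.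
  rewrite leNgt; apply/negP => lt; apply: hn2; by exists y'.
have mono eps eps' : 0 < eps -> eps <= eps' -> S eps `<=` S eps'.
  by move=> _ le y [Hy Hy']; split => //; exact: Heps_mono Hy.
have [M HM] := ht0.
have SB : S 1 `<=` closed_ball_ Num.norm (0 : 'rV[R]_N) (`|M| + 1).
  move=> y [[a [Ha _] hy] _]; rewrite /closed_ball_ /= sub0r normrN.
  change (mx_norm y <= `|M| + 1); rewrite mx_normrE.
  apply: bigmax_le => [|[i j] _] /=; first by rewrite addr_ge0.
  rewrite (ord1 i).
  have -> : y 0 j = hvec th a 0 j + (y - hvec th a) 0 j.
    by rewrite !mxE; ring.
  apply: le_trans (ler_normD _ _) _; apply: lerD.
    by rewrite mxE; apply: le_trans (HM a Ha j) _; exact: ler_norm.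
  exact: ltW (le_lt_trans (entry_le_enorm _ _) hy).
have [p Bp clp] := nested_cluster _ _ (compact_cball N (`|M| + 1)) ne mono SB.
have Hp : Hset th p.
  apply: Hset_closure => e' e'0.
  have r0 : 0 < e' / (N%:R + 1) by rewrite divr_gt0 // ltr_wpDl.
  have [z [[Hz _] pz]] := clp e' _ e'0 (nbhsx_ballx p _ r0).
  exists z => //; exact: ball_enorm _ _ _ e'0 pz.
have r0 : 0 < e / (N%:R + 1) by rewrite divr_gt0 // ltr_wpDl.
have [z [[_ Hz] pz]] := clp 1 _ ltr01 (nbhsx_ballx p _ r0).
have := Hz p Hp; rewrite enormB leNgt (ball_enorm _ _ _ e0 pz) //.
Qed.

Lemma core C eta : 0 <= C -> 0 < eta -> exists2 del, 0 < del & forall th th' a,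
  0 <= th.1.1 <= T -> 0 <= th'.1.1 <= T -> `|th.2| <= C -> in_A A a -> ball th del th' ->
  forall i, `|hi i th a - hi i th' a| < eta.
Proof.
move=> C0 eta0.
have [Mb hb] := bb.
have e30 : 0 < eta / 3 by rewrite divr_gt0.
have [df df0 hf] := uf _ e30.
set e2 := eta / 3 / (d%:R * C + 1).
have e20 : 0 < e2 by rewrite divr_gt0 // ltr_wpDl // mulr_ge0.
have [db db0 hb'] := ub _ e20.
set e4 := eta / 3 / (d%:R * `|Mb| + 1).
have e40 : 0 < e4 by rewrite divr_gt0 // ltr_wpDl // mulr_ge0.
exists (Num.min df (Num.min db e4)); first by rewrite !lt_min df0 db0 e40.
move=> th th' a ht ht' hC Ha /ball_state [h1 [h2 h3]] i.
move: h1 h2 h3; rewrite !lt_min => /andP[t1 /andP[t2 t3]] /andP[x1 /andP[x2 x3]] /andP[z1 /andP[z2 z3]].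
have aa del : 0 < del -> forall j, `|a j - a j| < del by move=> d0 j; rewrite subrr normr0.
have Hf := hf _ _ _ _ a a ht ht' Ha Ha t1 x1 (aa _ df0).
have Hb := hb' _ _ _ _ a a ht ht' Ha Ha t2 x2 (aa _ db0).
move: Hf Hb z3 hC; rewrite /Defs.hi.
set F := f th.1.1 th.1.2 a; set F' := f th'.1.1 th'.1.2 a.
set B := b th.1.1 th.1.2 a; set B' := b th'.1.1 th'.1.2 a.
set Z := th.2; set Z' := th'.2 => Hf Hb z3 hC.
have HB' : `|B'| <= `|Mb| by apply: le_trans (hb _ _ _ ht' Ha) (ler_norm _).
have -> : F 0 i + \sum_j B 0 j * Z i j - (F' 0 i + \sum_j B' 0 j * Z' i j) =
    (F - F') 0 i + \sum_j ((B - B') 0 j * Z i j + B' 0 j * (Z - Z') i j).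
  rewrite mxE [(- F') 0 i]mxE opprD addrACA -sumrB; congr (_ + _); apply: eq_bigr => j _.
  rewrite !mxE; ring.
have s1 : `|(F - F') 0 i| < eta / 3 := le_lt_trans (mx_entry_le _ _ _) Hf.
have s2 : `|\sum_j ((B - B') 0 j * Z i j + B' 0 j * (Z - Z') i j)| <= eta / 3 + eta / 3.
  apply: le_trans (ler_norm_sum _ _ _) _.
  apply: (@le_trans _ _ (\sum_(j < d) (e2 * C + `|Mb| * e4))).
    apply: ler_sum => j _; apply: le_trans (ler_normD _ _) _; rewrite !normrM.
    apply: lerD; apply: ler_pM => //.
    - exact: ltW (le_lt_trans (mx_entry_le _ _ _) Hb).
    - exact: le_trans (mx_entry_le _ _ _) hC.
    - exact: le_trans (mx_entry_le _ _ _) HB'.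
    - exact: ltW (le_lt_trans (mx_entry_le _ _ _) z3).
  rewrite sumr_const card_ord -[_ *+ d]mulr_natl mulrDr; apply: lerD.
    have -> : d%:R * (e2 * C) = (d%:R * C) * e2 by ring.
    by rewrite /e2; apply: mul_div_le => //; rewrite mulr_ge0.
  have -> : d%:R * (`|Mb| * e4) = (d%:R * `|Mb|) * e4 by ring.
  by rewrite /e4; apply: mul_div_le => //; rewrite mulr_ge0.
apply: le_lt_trans (ler_normD _ _) _.
lra.
Qed.

Lemma transfer C eta : 0 <= C -> 0 < eta -> exists2 del, 0 < del & forall th th',
  0 <= th.1.1 <= T -> 0 <= th'.1.1 <= T -> `|th.2| <= C -> ball th del th' ->
  Close eta th th' /\ Close eta th' th.
Proof.
move=> C0 eta0.
have N1 : 0 < N%:R + 1 :> R by rewrite ltr_wpDl.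
have eN : 0 < eta / (N%:R + 1) by rewrite divr_gt0.
have [del del0 H] := core _ _ C0 eN.
exists del => // th th' ht ht' hC hb.
have key a : in_A A a -> (forall i, `|hi i th a - hi i th' a| < eta) /\
    enorm (hvec th a - hvec th' a) < eta.
  move=> Ha; have Hi := H _ _ a ht ht' hC Ha hb.
  split.
    move=> i; apply: lt_le_trans (Hi i) _.
    rewrite ler_pdivrMr // mulrDr mulr1; have : 0 <= eta * N%:R by rewrite mulr_ge0 // ltW.
    lra.
  apply: le_lt_trans (enorm_le_sum _) _.
  apply: (@le_lt_trans _ _ (\sum_(i < N) eta / (N%:R + 1))).
    by apply: ler_sum => i _; rewrite !mxE; exact: ltW (Hi i).
  rewrite sumr_const card_ord -[_ *+ N]mulr_natl mulrA ltr_pdivrMr // mulrDr mulr1.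
  lra.
split => a Ha; first exact: key.
have [k1 k2] := key a Ha; split; last by rewrite enormB.
by move=> i; rewrite distrC; exact: k1.
Qed.

End Game.

Arguments Heps_close {R d N k A b f}.
Arguments Hset_Heps {R d N k A b f}.
Arguments Heps_mono {R d N k A b f}.
Arguments haus_lt {R n}.
Arguments haus_le {R n}.

Lemma cv_extract (R : realType) (g : R -> \bar R) (c : R) : 0 < c ->
  g x @[x --> 0^'+] --> 0%E ->
  exists2 d, 0 < d & forall x, 0 < x < d -> (g x < c%:E)%E.
Proof.
move=> c0 cv.
have := cv _ (@nbhs_open_ereal_lt R 0 (fun=> c) c0).
move=> /nbhs_ballP [del /= del0 H]; exists del => // x /andP[x0 xd].
apply: H => //. rewrite -ball_normE /= sub0r normrN gtr0_norm //.
Qed.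

Lemma cv_intro (R : realType) (g : R -> \bar R) :
  (forall e, 0 < e -> exists2 d, 0 < d & forall x, 0 < x < d -> (0 <= g x <= e%:E)%E) ->
  g x @[x --> 0^'+] --> 0%E.
Proof.
move=> H U /nbhs_EFin /nbhs_ballP [e /= e0 HU].
have e20 : 0 < e / 2 by rewrite divr_gt0.
have [del del0 Hd] := H _ e20.
exists del => // x /= hx x0.
have xd : 0 < x < del by rewrite x0 /=; move: hx; rewrite sub0r normrN gtr0_norm.
have /andP[g0 ge] := Hd x xd.
have fin : g x \is a fin_num by rewrite ge0_fin_numE // (le_lt_trans ge) // ltry.
rewrite -(fineK fin); apply: HU; rewrite -ball_normE /= sub0r normrN ger0_norm ?fine_ge0 //.
rewrite -lte_fin fineK //; apply: le_lt_trans ge _; rewrite lte_fin; lra.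
Qed.

Lemma rho_lt {R : realType} {d N} {k : 'I_N -> nat}
  (b : R -> 'rV[R]_d -> @profile R N k -> 'rV[R]_d)
  (f : R -> 'rV[R]_d -> @profile R N k -> 'rV[R]_N)
  (A : forall i : 'I_N, set 'rV[R]_(k i)) (K : set (state R d N)) eps x th :
  (rhoK b f A K eps < x)%E -> K th ->
  (hausdorff (Heps b f A eps th) (Hset b f A th) < x)%E.
Proof.
move=> h Kth; apply: le_lt_trans h; apply: le_ereal_sup_tmp.
by exists (hausdorff (Heps b f A eps th) (Hset b f A th)) => //; right; exists th.
Qed.

Lemma rho_le {R : realType} {d N} {k : 'I_N -> nat}
  (b : R -> 'rV[R]_d -> @profile R N k -> 'rV[R]_d)
  (f : R -> 'rV[R]_d -> @profile R N k -> 'rV[R]_N)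
  (A : forall i : 'I_N, set 'rV[R]_(k i)) (K : set (state R d N)) eps x :
  (0 <= x)%E -> (forall th, K th -> (hausdorff (Heps b f A eps th) (Hset b f A th) <= x)%E) ->
  (rhoK b f A K eps <= x)%E.
Proof.
by move=> x0 h; apply/ereal_supP => _ [->|[th Kth <-]] //; exact: h.
Qed.

Lemma rho_ge0 {R : realType} {d N} {k : 'I_N -> nat}
  (b : R -> 'rV[R]_d -> @profile R N k -> 'rV[R]_d)
  (f : R -> 'rV[R]_d -> @profile R N k -> 'rV[R]_N)
  (A : forall i : 'I_N, set 'rV[R]_(k i)) (K : set (state R d N)) eps :
  (0 <= rhoK b f A K eps)%E.
Proof. by apply: le_ereal_sup_tmp; exists 0%E => //; left. Qed.

Theorem proposition3p1 (R : realType) (d N : nat) (T : R) (k : 'I_N -> nat)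
  (A : forall i : 'I_N, set 'rV[R]_(k i))
  (b : R -> 'rV[R]_d -> profile k -> 'rV[R]_d)
  (f : R -> 'rV[R]_d -> profile k -> 'rV[R]_N)
  (g : 'rV[R]_d -> 'rV[R]_N) :
  (0 < d)%N -> (0 < N)%N -> 0 < T ->
  (forall i, open (A i) /\ connected (A i) /\ A i !=set0) ->
  bounded_on_dom T A b -> unif_cont_on_dom T A b ->
  bounded_on_dom T A f -> unif_cont_on_dom T A f ->
  (exists M : R, forall x, `|g x| <= M) ->
  (forall e : R, 0 < e -> exists2 del : R, 0 < del &
     forall x x', `|x - x'| < del -> `|g x - g x'| < e) ->
  forall K : set (state R d N), compact K -> K `<=` Xset d N T ->
    (rhoK b f A K eps @[eps --> 0^'+] --> 0%E) <->
    Hd_unif_cont_on (Hset b f A) K.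
Proof.
move=> _ _ _ _ bb ub bf uf _ _ K cK KX.
have [C [C0 HC]] := compact_zbound _ cK.
have TR := transfer _ _ _ _ _ _ _ _ bb ub uf C.
split.
- move=> cv e e0.
  have e20 : 0 < e / 2 by rewrite divr_gt0.
  have [eps0 eps00 Heps0] := cv_extract _ _ _ e20 cv.
  have eta0 : 0 < eps0 / 4 by rewrite divr_gt0.
  have [del del0 Htr] := TR _ C0 eta0.
  exists del => // th th' Kth Kth' hball.
  have [Cl1 Cl2] := Htr th th' (KX _ Kth) (KX _ Kth') (HC _ Kth) hball.
  have r1 : (rhoK b f A K (eps0 / 4 + 2 * (eps0 / 4)) < (e / 2)%:E)%E.
    apply: Heps0; apply/andP; split; lra.
  have [h1 _] := haus_lt _ _ _ (rho_lt _ _ _ _ _ _ th' r1 Kth').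
  have [h2 _] := haus_lt _ _ _ (rho_lt _ _ _ _ _ _ th r1 Kth).
  apply: (@le_lt_trans _ _ (e / 2)%:E); last by rewrite lte_fin; lra.
  apply: haus_le; first exact: ltW.
  + move=> y Hy.
    have y1 := Heps_close _ (eps0 / 4) _ _ eta0 Cl1 _ (Hset_Heps _ _ eta0 _ Hy).
    by have [y' Hy' hy] := h1 y y1; exists y' => //; exact: ltW.
  + move=> y Hy.
    have y1 := Heps_close _ (eps0 / 4) _ _ eta0 Cl2 _ (Hset_Heps _ _ eta0 _ Hy).
    by have [y' Hy' hy] := h2 y y1; exists y' => //; exact: ltW.
- move=> HU; apply: cv_intro => e e0.
  suff [eps0 eps00 Hg] : exists2 eps0, 0 < eps0 & forall eps, 0 < eps < eps0 ->
      forall th, K th -> forall y, Heps b f A eps th y ->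
      exists2 y', Hset b f A th y' & enorm (y - y') < e.
    exists eps0 => // eps epsI; have /andP[eps_0 _] := epsI.
    rewrite rho_ge0 /=; apply: rho_le; first by rewrite lee_fin ltW.
    move=> th Kth; apply: haus_le; first exact: ltW.
      move=> y Hy; have [y' Hy' hy] := Hg eps epsI th Kth y Hy.
      by exists y' => //; exact: ltW.
    move=> y Hy; exists y; first exact: (Hset_Heps _ _ eps_0 _ Hy).
    by rewrite subrr enorm00 ltW.
  have e20 : 0 < e / 2 by rewrite divr_gt0.
  have [del1 del10 Hd1] := HU _ e20.
  have [//|nH] := pselect (exists2 eps0, 0 < eps0 & forall eps, 0 < eps < eps0 ->
      forall th, K th -> forall y, Heps b f A eps th y ->
      exists2 y', Hset b f A th y' & enorm (y - y') < e).
  pose Q (eps0 : R) := [set th | K th /\ exists eps, 0 < eps < eps0 /\ exists y,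
      Heps b f A eps th y /\ forall y', Hset b f A th y' -> e <= enorm (y - y')].
  have ne eps0 : 0 < eps0 -> Q eps0 !=set0.
    move=> eps00; apply: contrapT => hn; apply: nH; exists eps0 => // eps epsI th Kth y Hy.
    apply: contrapT => hn2; apply: hn; exists th; split => //; exists eps; split => //.
    exists y; split => // y' Hy'; rewrite leNgt; apply/negP => lt; apply: hn2; by exists y'.
  have mono e1 e2 : 0 < e1 -> e1 <= e2 -> Q e1 `<=` Q e2.
    move=> _ le th [Kth [eps [/andP[h1 h2] rest]]]; split => //; exists eps; split => //.
    by rewrite h1 (lt_le_trans h2 le).
  have QK : Q 1 `<=` K by move=> th [].
  have [p Kp clp] := nested_cluster _ _ cK ne mono QK.
  have [es es0 Hes] := pointwise _ _ _ _ _ _ _ _ bb bf p (KX _ Kp) _ e20.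
  have eta0 : 0 < es / 4 by rewrite divr_gt0.
  have [del2 del20 Htr] := TR _ C0 eta0.
  have r0 : 0 < Num.min del1 del2 by rewrite lt_min del10 del20.
  have es2 : 0 < es / 2 by rewrite divr_gt0.
  have [th [[Kth [eps [/andP[eps0 eps1] [y [Hy Hfar]]]]] pth]] :=
    clp _ _ es2 (nbhsx_ballx p _ r0).
  have pth2 : ball p del2 th by apply: le_ball pth; rewrite ge_min lexx orbT.
  have pth1 : ball p del1 th by apply: le_ball pth; rewrite ge_min lexx.
  have [_ Cl] := Htr p th (KX _ Kp) (KX _ Kth) (HC _ Kp) pth2.
  have y0 := Heps_close _ _ _ _ eta0 Cl _ Hy.
  have y1 : Heps b f A es p y.
    by apply: (Heps_mono _ _ _ _ _ y0); lra.
  have [y2 Hy2 h2] := Hes y y1.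
  have [hh _] := haus_lt _ _ _ (Hd1 p th Kp Kth pth1).
  have [y3 Hy3 h3] := hh y2 Hy2.
  have := Hfar y3 Hy3.
  have := enorm_tri y y2 y3.
  lra.
Qed.
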